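(* Let $S$ be a memory system satisfying the Causality assumption, let $n,m,v\ge1$, and let $\Omega$ be a witness for $S(n,m,v)$. For every unambiguous trace $\tau$ of $S(n,m,v)$, every location $1\le i\le m$, and all $r,s,t\in L(\tau,i)$: if $\langle r,s\rangle\in\Omega^e(\tau,i)$, then $\langle r,t\rangle\in\Omega^e(\tau,i)$ or $\langle t,s\rangle\in\Omega^e(\tau,i)$.
   Context: Notation: $\mathbb{N}_n=\{1,\dots,n\}$, $\mathbb{W}_n=\{0,\dots,n\}$. Memory events $E(n,m,v)=\{R,W\}\times\mathbb{N}_n\times\mathbb{N}_m\times\mathbb{W}_v$; for $e=\langle a,b,c,d\rangle$, $op(e)=a$, $proc(e)=b$, $loc(e)=c$, $data(e)=d$; $0$ models the initial value of every location. A memory system is a family $S=(S(n,m,v))_{n,m,v\ge1}$, $S(n,m,v)$ a regular set of finite runs over an alphabet $E^a(n,m,v)\supseteq E(n,m,v)$ (other letters are internal events). The trace of a run is its subsequence of memory events; traces of $S(n,m,v)$ are traces of its runs. For a sequence $\tau$ of memory events: $L(\tau,j)=\{k: loc(\tau(k))=j\}$, $L^w(\tau,j)=\{k\in L(\tau,j): op(\tau(k))=W\}$, $L^r(\tau,j)=\{k\in L(\tau,j): op(\tau(k))=R\}$. A trace $\tau$ is unambiguous if for every location $j$ and $x\in L^w(\tau,j)$, $data(\tau(x))\ne0$ and $data(\tau(x))\ne data(\tau(y))$ for all $y\in L^w(\tau,j)\setminus\{x\}$. Causality assumption: for all $n,m,v\ge1$, every trace $\tau$ of $S(n,m,v)$,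 every location $j$ and every $x\in L^r(\tau,j)$, either $data(\tau(x))=0$ or there is $y\in L^w(\tau,j)$ with $data(\tau(x))=data(\tau(y))$. A witness $\Omega$ for $S(n,m,v)$ assigns to every trace $\tau$ of $S(n,m,v)$ and location $j$ a strict total order $\Omega(\tau,j)$ on $L^w(\tau,j)$. For an unambiguous trace $\tau$, the relation $\Omega^e(\tau,j)\subseteq L(\tau,j)\times L(\tau,j)$ is defined by: $\langle x,y\rangle\in\Omega^e(\tau,j)$ iff (1) $data(\tau(x))=data(\tau(y))$, $op(\tau(x))=W$ and $op(\tau(y))=R$; or (2) $data(\tau(x))=0$ and $data(\tau(y))\ne0$; or (3) there are $a,b\in L^w(\tau,j)$ with $\langle a,b\rangle\in\Omega(\tau,j)$, $data(\tau(a))=data(\tau(x))$ and $data(\tau(b))=data(\tau(y))$. *)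

(* Defs.v *)
From mathcomp Require Import all_boot.
Set Implicit Arguments. Unset Strict Implicit. Unset Printing Implicit Defensive.

Inductive mop := OpR | OpW.
Definition mop_eqb (a b : mop) : bool :=
  match a, b with OpR, OpR | OpW, OpW => true | _, _ => false end.

Record mevent := MEv { op : mop; proc : nat; loc : nat; data : nat }.

Definition in_E (n m v : nat) (e : mevent) : bool :=
  [&& 1 <= proc e <= n, 1 <= loc e <= m & data e <= v].

Inductive letter (I : Type) := Mem of mevent | Int of I.
Arguments Mem {I}. Arguments Int {I}.

Definition letter_ok (I : Type) (n m v : nat) (l : letter I) : bool :=
  match l with Mem e => in_E n m v e | Int _ => true end.

Record dfa (A : Type) := Dfa {
  dfa_state : finType;
  dfa_start : dfa_state;
  dfa_step : dfa_state -> A -> dfa_state;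
  dfa_final : pred dfa_state }.

Definition dfa_accepts (A : Type) (D : dfa A) (w : seq A) : bool :=
  @dfa_final A D (foldl (@dfa_step A D) (@dfa_start A D) w).

Definition regular_over (A : Type) (ok : pred A) (L : seq A -> Prop) : Prop :=
  exists D : dfa A, forall w, L w <-> (all ok w && dfa_accepts D w).

Definition memory_system (Iint : nat -> nat -> nat -> finType)
  (S : forall n m v, seq (letter (Iint n m v)) -> Prop) : Prop :=
  forall n m v, 1 <= n -> 1 <= m -> 1 <= v ->
    regular_over (letter_ok n m v) (S n m v).

Definition trace_of (I : Type) (r : seq (letter I)) : seq mevent :=
  pmap (fun l => match l with Mem e => Some e | Int _ => None end) r.

Definition is_trace (Iint : nat -> nat -> nat -> finType)
  (S : forall n m v, seq (letter (Iint n m v)) -> Prop)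
  (n m v : nat) (tau : seq mevent) : Prop :=
  exists r, S n m v r /\ trace_of r = tau.

(* Positions of a trace are 0-based indices k < size tau; tau(k) = nth. *)
Definition ev0 : mevent := MEv OpR 0 0 0.
Definition tnth (tau : seq mevent) (k : nat) : mevent := nth ev0 tau k.

Definition inL (tau : seq mevent) (j k : nat) : Prop :=
  k < size tau /\ loc (tnth tau k) = j.
Definition inLw (tau : seq mevent) (j k : nat) : Prop :=
  inL tau j k /\ op (tnth tau k) = OpW.
Definition inLr (tau : seq mevent) (j k : nat) : Prop :=
  inL tau j k /\ op (tnth tau k) = OpR.

Definition unambiguous (tau : seq mevent) : Prop :=
  forall j x, inLw tau j x ->
    data (tnth tau x) <> 0 /\
    (forall y, inLw tau j y -> y <> x -> data (tnth tau x) <> data (tnth tau y)).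

Definition causality (Iint : nat -> nat -> nat -> finType)
  (S : forall n m v, seq (letter (Iint n m v)) -> Prop) : Prop :=
  forall n m v, 1 <= n -> 1 <= m -> 1 <= v ->
  forall tau, is_trace S n m v tau ->
  forall j x, inLr tau j x ->
    data (tnth tau x) = 0 \/
    exists y, inLw tau j y /\ data (tnth tau x) = data (tnth tau y).

Definition strict_total_on (P : nat -> Prop) (rel : nat -> nat -> Prop) : Prop :=
  (forall x y, rel x y -> P x /\ P y) /\
  (forall x, ~ rel x x) /\
  (forall x y z, rel x y -> rel y z -> rel x z) /\
  (forall x y, P x -> P y -> x <> y -> rel x y \/ rel y x).

Definition witness (Iint : nat -> nat -> nat -> finType)
  (S : forall n m v, seq (letter (Iint n m v)) -> Prop) (n m v : nat)
  (Omega : seq mevent -> nat -> nat -> nat -> Prop) : Prop :=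
  forall tau, is_trace S n m v tau ->
  forall j, 1 <= j <= m -> strict_total_on (inLw tau j) (Omega tau j).

Definition Omega_e (Omega : seq mevent -> nat -> nat -> nat -> Prop)
  (tau : seq mevent) (j x y : nat) : Prop :=
  inL tau j x /\ inL tau j y /\
  ( (data (tnth tau x) = data (tnth tau y) /\
       op (tnth tau x) = OpW /\ op (tnth tau y) = OpR)
    \/ (data (tnth tau x) = 0 /\ data (tnth tau y) <> 0)
    \/ (exists a b, inLw tau j a /\ inLw tau j b /\ Omega tau j a b /\
          data (tnth tau a) = data (tnth tau x) /\
          data (tnth tau b) = data (tnth tau y)) ).

(* Main.v *)
Require Import Defs.
From mathcomp Require Import all_boot.

Theorem lemma5p1 (Iint : nat -> nat -> nat -> finType)
  (S : forall n m v, seq (letter (Iint n m v)) -> Prop)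
  (HS : memory_system S) (Hcaus : causality S)
  (n m v : nat) (hn : 1 <= n) (hm : 1 <= m) (hv : 1 <= v)
  (Omega : seq mevent -> nat -> nat -> nat -> Prop)
  (HOm : witness S n m v Omega)
  (tau : seq mevent) (Htau : is_trace S n m v tau) (Hun : unambiguous tau)
  (i : nat) (hi : 1 <= i <= m) (r s t : nat)
  (hr : inL tau i r) (hs : inL tau i s) (ht : inL tau i t) :
  Omega_e Omega tau i r s ->
  Omega_e Omega tau i r t \/ Omega_e Omega tau i t s.
Proof.
  have [Hdom [Hirr [Htr Htot]]] := HOm tau Htau i hi.
  move=> [_ [_ H]].
  have nz : forall x, inLw tau i x -> data (Defs.tnth tau x) <> 0.
    by move=> x Hx; case: (Hun i x Hx).
  case: (eqVneq (data (Defs.tnth tau t)) 0) => [t0|tn0].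
  -
    right; split; [exact ht|split; [exact hs|right; left; split=>//]].
    case: H => [[E1 [E2 E3]]|[[_ E]|[a [b [Ha [Hb [_ [_ E]]]]]]]] //.
    + rewrite -E1; exact: (nz r (conj hr E2)).
    + rewrite -E; exact: nz.
  -
    have [w [Hw Ew]] : exists w, inLw tau i w /\ data (Defs.tnth tau w) = data (Defs.tnth tau t).
      case Eop: (op (Defs.tnth tau t)).
      + have := Hcaus n m v hn hm hv tau Htau i t (conj ht Eop).
        case=> [E|[y [Hy Ey]]]; first by rewrite E in tn0.
        by exists y; split.
      + by exists t; split=> //; split.
    case: H => [[E1 [E2 E3]]|[[E1 E2]|[a [b [Ha [Hb [Hab [Ea Eb]]]]]]]].
    + case: (eqVneq w r) => [Ewr|wr]; first subst w.
      * case Eop: (op (Defs.tnth tau t)).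
        -- left; split=>//; split=>//; left; split=>//; by rewrite -Ew.
        -- right; split=>//; split=>//; left; split=>//; by rewrite -Ew.
      * case: (Htot r w (conj hr E2) Hw (fun e => (negP wr) (introT eqP (esym e)))) => Hrw.
        -- left; split=>//; split=>//; right; right.
           by exists r, w; do 4 (split=>//); split.
        -- right; split=>//; split=>//; right; right.
           by exists w, r; do 4 (split=>//); split.
    + left; split=>//; split=>//; right; left; split=>//; exact/eqP.
    + case: (eqVneq w a) => [Ewa|wa].
      * right; split=>//; split=>//; right; right.
        by exists a, b; do 4 (split=>//); rewrite -Ewa.
      * case: (Htot a w Ha Hw (fun e => (negP wa) (introT eqP (esym e)))) => Haw.
        -- left; split=>//; split=>//; right; right.
           by exists a, w; do 4 (split=>//).
        -- right; split=>//; split=>//; right; right.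
           exists w, b; split=>//; split=>//; split; [exact: Htr Haw Hab|by split].
Qed.
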